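(* Let $P$ be a finite rooted poset which is a frame for $\mathsf{wPL}$. Then $P\Vdash\mathcal{J}(Q_4)$ and $P\Vdash\mathcal{J}(Q_5)$ if and only if $P$ has stack-depth at most $1$.
   Context: $\mathsf{wPL}=\mathsf{IPC}\oplus (q\to p)\vee\big(((p\to q)\to p)\to p\big)$; its finite rooted frames are exactly the Boolean sums. The depth of a point $x$ in a finite poset is the largest $m$ such that there is a chain $x=x_1<\dots<x_m$ (maximal points have depth $1$). A finite rooted poset is a Boolean sum if (1) whenever $y$ is an immediate successor of $x$ then $d(x)=d(y)+1$, and (2) each point of depth $k+1$ lies below all points of depth $k$, for every $k$. For a Boolean sum of depth $m$ let $c_i$ be the number of points of depth $i$; a $k$-stack is a run of $k$ consecutive depths $i,i+1,\dots,i+k-1$ with $c_j>1$ for each of them; the stack-depth is the largest $k$ such that a $k$-stack exists (0 if none). For a finite rooted poset $Q$, the Yankov (Jankov) formula $\mathcal{J}(Q)$ has the property: for every finite poset $P$, $P\not\Vdash\mathcal{J}(Q)$ iff $Q$ is isomorphic to a rooted upset of a p-morphic image of $P$. $Q_4$ is the Boolean sum with layers of sizes $1,2,2$ from bottom to top: a root $r$, two points $a,b$ above $r$, and two maximal points $u,v$ each above both $a$ and $b$. $Q_5$ is $Q_4$ with an additional top point above $u$ and $v$. *)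

(* Defs.v *)
From mathcomp Require Import all_boot.
Set Implicit Arguments. Unset Strict Implicit. Unset Printing Implicit Defensive.

Record finPoset := FinPoset {
  carrier :> finType;
  le : rel carrier;
  le_refl : reflexive le;
  le_anti : antisymmetric le;
  le_trans : transitive le }.

Arguments le {_}.

Section Basics.
Variable P : finPoset.

Definition lt (x y : P) := le x y && (x != y).

Definition rooted := exists r : P, forall x : P, le r x.

(* x is the start of a strict chain x = x_1 < ... < x_m of m points *)
Definition has_chain (x : P) (m : nat) : bool :=
  [exists t : m.-1.-tuple P, path lt x t].

Definition depth_is (x : P) (m : nat) : bool :=
  [&& 0 < m, has_chain x m & ~~ has_chain x m.+1].

Definition cnt (i : nat) : nat := #|[set x : P | depth_is x i]|.

Definition has_stack (k : nat) : Prop :=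
  exists i, 0 < i /\ forall j, i <= j < i + k -> 1 < cnt j.

Definition stack_depth_le (n : nat) : Prop :=
  forall k, has_stack k -> k <= n.

(* Kripke validity of the wPL axiom (q -> p) \/ (((p -> q) -> p) -> p),
   valuations ranging over upsets. *)
Definition upset (U : P -> bool) := forall x y, le x y -> U x -> U y.

Definition frame_wPL : Prop :=
  forall (Up Uq : P -> bool), upset Up -> upset Uq ->
  forall x : P,
    (forall y, le x y -> Uq y -> Up y) \/
    (forall y, le x y ->
       (forall z, le y z ->
          (forall w, le z w -> Up w -> Uq w) -> Up z) -> Up y).
End Basics.

Definition pmorphism (P R : finPoset) (f : P -> R) : Prop :=
  (forall x y : P, le x y -> le (f x) (f y)) /\
  (forall (x : P) (y' : R), le (f x) y' -> exists2 y : P, le x y & f y = y').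

Definition iso_rooted_upset (Q R : finPoset) : Prop :=
  exists (r : R) (g : Q -> R),
    [/\ injective g,
        (forall a b : Q, le (g a) (g b) = le a b) &
        (forall y : R, le r y <-> exists q : Q, g q = y)].

(* P |= J(Q), via the defining property of the Jankov formula:
   P does not validate J(Q) iff Q is isomorphic to a rooted upset of a
   p-morphic image of P. *)
Definition validates_Jankov (P Q : finPoset) : Prop :=
  ~ exists (R : finPoset) (f : P -> R),
      [/\ pmorphism f, (forall y : R, exists x : P, f x = y) & iso_rooted_upset Q R].

(* Q4: 0 = root r, 1 = a, 2 = b, 3 = u, 4 = v *)
Definition leQ4 (x y : 'I_5) : bool :=
  [|| x == y, val x == 0 | (val x \in [:: 1; 2]) && (val y \in [:: 3; 4])].
(* Q5: Q4 plus 5 = top above u and v *)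
Definition leQ5 (x y : 'I_6) : bool :=
  [|| x == y, val x == 0, val y == 5 |
      (val x \in [:: 1; 2]) && (val y \in [:: 3; 4])].

Lemma leQ4_refl : reflexive leQ4.
Proof. by move=> x; rewrite /leQ4 eqxx. Qed.
Lemma leQ4_anti : antisymmetric leQ4.
Proof.
move=> x y /andP[].
case: x => [[|[|[|[|[|?]]]]] ?]; case: y => [[|[|[|[|[|?]]]]] ?] //= _ _; exact/val_inj.
Qed.
Lemma leQ4_trans : transitive leQ4.
Proof.
move=> y x z.
by case: x => [[|[|[|[|[|?]]]]] ?]; case: y => [[|[|[|[|[|?]]]]] ?];
  case: z => [[|[|[|[|[|?]]]]] ?].
Qed.
Definition Q4 : finPoset := FinPoset leQ4_refl leQ4_anti leQ4_trans.

Lemma leQ5_refl : reflexive leQ5.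
Proof. by move=> x; rewrite /leQ5 eqxx. Qed.
Lemma leQ5_anti : antisymmetric leQ5.
Proof.
move=> x y /andP[].
case: x => [[|[|[|[|[|[|?]]]]]] ?]; case: y => [[|[|[|[|[|[|?]]]]]] ?] //= _ _;
  exact/val_inj.
Qed.
Lemma leQ5_trans : transitive leQ5.
Proof.
move=> y x z.
by case: x => [[|[|[|[|[|[|?]]]]]] ?]; case: y => [[|[|[|[|[|[|?]]]]]] ?];
  case: z => [[|[|[|[|[|[|?]]]]]] ?].
Qed.
Definition Q5 : finPoset := FinPoset leQ5_refl leQ5_anti leQ5_trans.

(* Main.v *)
Require Import Defs.
From mathcomp Require Import all_boot.
From mathcomp Require Import zify.
Set Implicit Arguments. Unset Strict Implicit. Unset Printing Implicit Defensive.

Section Depth.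
Variable P : finPoset.

Lemma lt_irr (x : P) : lt x x = false.
Proof. by rewrite /lt eqxx andbF. Qed.

Lemma lt_trans : transitive (@lt P).
Proof.
move=> y x z /andP[xy nxy] /andP[yz nyz]; rewrite /lt (le_trans xy yz) /=.
apply/eqP => exz; subst z; move/eqP: nxy; apply.
by apply/le_anti; rewrite xy yz.
Qed.

Lemma hcP (x : P) m :
  reflect (exists s : seq P, size s = m.-1 /\ path (@lt P) x s) (has_chain x m).
Proof.
apply: (iffP existsP) => [[t Ht]|[s [Hs Hp]]].
  by exists (val t); rewrite size_tuple.
by exists (@Tuple _ _ s (introT eqP Hs)).
Qed.

Lemma hc_bound (x : P) m : has_chain x m -> m <= #|P|.
Proof.
case/hcP=> s [Hs Hp].
have U : uniq (x :: s) by apply: (sorted_uniq lt_trans); [move=> y; exact: lt_irr|].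
have := max_card (mem (x :: s)); move/card_uniqP: U => ->.
rewrite /= Hs; lia.
Qed.

Lemma hc0 (x : P) m : m <= 1 -> has_chain x m.
Proof. by move=> Hm; apply/hcP; exists [::]; split => //; case: m Hm => [|[]]. Qed.

Lemma hc_pred (x : P) m : has_chain x m.+1 -> has_chain x m.
Proof.
case: m => [|m]; first by move=> _; exact: hc0.
case/hcP=> s [Hs Hp]; apply/hcP; exists (take m s); split.
  by rewrite size_take /= Hs /=; case: ifP => //; lia.
by move: Hp; rewrite -{1}(cat_take_drop m s) cat_path => /andP[].
Qed.

Lemma hc_down (x : P) m n : m <= n -> has_chain x n -> has_chain x m.
Proof.
move=> le_mn; rewrite -(subnK le_mn); elim: (n - m) => //= k IH H.
by apply: IH; apply: hc_pred; rewrite -addSn.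
Qed.

Lemma hc_cons (x y : P) m : lt x y -> has_chain y m -> has_chain x m.+1.
Proof.
case: m => [|m] lxy; first by move=> _; exact: hc0.
case/hcP=> s [Hs Hp]; apply/hcP; exists (y :: s); split; first by rewrite /= Hs.
by rewrite /= lxy Hp.
Qed.

Lemma hc_uncons (x : P) m : has_chain x m.+2 ->
  exists2 y, lt x y & has_chain y m.+1.
Proof.
case/hcP=> [[|y s]] [Hs Hp] //; move: Hp => /= /andP[lxy Hp].
by exists y => //; apply/hcP; exists s; split => //; case: Hs.
Qed.

Lemma hc_ex (x : P) : exists i, has_chain x i.
Proof. by exists 0; exact: hc0. Qed.

Definition d (x : P) : nat := ex_maxn (hc_ex x) (@hc_bound x).

Lemma hcE (x : P) m : has_chain x m = (m <= d x).
Proof.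
rewrite /d; case: ex_maxnP => n Hn Hmax.
apply/idP/idP; first exact: Hmax.
by move=> Hm; apply: hc_down Hm Hn.
Qed.

Lemma d_gt0 (x : P) : 0 < d x.
Proof. by rewrite -hcE; apply: hc0. Qed.

Lemma d_lt (x y : P) : lt x y -> d y < d x.
Proof. by move=> lxy; rewrite -hcE; apply: hc_cons lxy _; rewrite hcE. Qed.

Lemma d_le (x y : P) : le x y -> d y <= d x.
Proof.
move=> lxy; case: (eqVneq x y) => [->//|nxy].
by apply: ltnW; apply: d_lt; rewrite /lt lxy nxy.
Qed.

Lemma d_up_aux n (x : P) k : d x = k + n -> 0 < k -> exists2 y, le x y & d y = k.
Proof.
elim: n x => [|n IH] x Hd Hk; first by exists x; [exact: le_refl | lia].
have : has_chain x (k + n).-1.+2.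
  by rewrite hcE; lia.
case/hc_uncons => y lxy Hy.
have Hdy := d_lt lxy; rewrite hcE in Hy.
have [z yz dz] : exists2 z, le y z & d z = k by apply: IH => //; lia.
by exists z => //; apply: le_trans yz; case/andP: lxy.
Qed.

Lemma d_up (x : P) k : 0 < k <= d x -> exists2 y, le x y & d y = k.
Proof.
case/andP=> Hk Hkd; apply: (@d_up_aux (d x - k)) => //; lia.
Qed.

Lemma depth_isE (x : P) m : depth_is x m = (0 < m) && (m == d x).
Proof. by rewrite /depth_is !hcE; case: (0 < m) => //=; apply/idP/idP; lia. Qed.

End Depth.
Section Bsum.
Variable P : finPoset.
Hypothesis hr : rooted P.
Hypothesis hw : frame_wPL P.

Lemma bsum (x y : P) : d y < d x -> le x y.
Proof.
move=> Hxy; case Hle: (le x y) => //; exfalso.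
have [z xz dz] : exists2 z, le x z & d z = (d y).+1 by apply: d_up; lia.
have nzy : ~~ le z y.
  by apply/negP => zy; rewrite (le_trans xz zy) in Hle.
case: hr => r Hr.
pose Up := fun u : P => (d u <= d y) && (u != y).
pose Uq := fun u : P => le y u.
have upUp : upset Up.
  move=> u u' uu' /andP[Hu Hn]; apply/andP; split.
    by have := d_le uu'; lia.
  apply/eqP => e; subst u'.
  by have := @d_lt _ u y; rewrite /lt uu' Hn => /(_ isT); lia.
have upUq : upset Uq by move=> u u' uu' yu; apply: le_trans yu uu'.
case: (hw upUp upUq r) => [H|H].
  by have := H y (Hr y) (le_refl y); rewrite /Up eqxx andbF.
have Hz : ~~ Up z by rewrite /Up dz ltnn.
move/negP: Hz; apply; apply: H (Hr z) _ => w zw Hw.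
case: (eqVneq z w) => [ezw|nzw].
  subst w; exfalso.
  have [w' zw' dw'] : exists2 w', le z w' & d w' = d y by apply: d_up; rewrite d_gt0; lia.
  have : Uq w'.
    apply: (Hw w' zw'); rewrite /Up dw' leqnn /=; apply/eqP => e; subst w'.
    by rewrite zw' in nzy.
  rewrite /Uq => yw'; case: (eqVneq y w') => [e|ne].
    by subst w'; rewrite zw' in nzy.
  by have := @d_lt _ y w'; rewrite /lt yw' ne => /(_ isT); lia.
have := @d_lt _ z w; rewrite /lt zw nzw dz => /(_ isT) h.
apply/andP; split; first lia.
by apply/eqP => e; subst w; rewrite zw in nzy.
Qed.

Lemma leE (x y : P) : le x y = (x == y) || (d y < d x).
Proof.
case: eqVneq => [->|nxy] /=; first by rewrite le_refl.
apply/idP/idP; last exact: bsum.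
by move=> h; apply: d_lt; rewrite /lt h nxy.
Qed.
End Bsum.
Section Main.
Variable P : finPoset.
Hypothesis hr : rooted P.
Hypothesis hw : frame_wPL P.

Lemma stack_from (R : finPoset) (f : P -> R) (A B U V : R) :
  pmorphism f -> (forall y, exists x, f x = y) ->
  A != B -> U != V -> ~~ le U V -> ~~ le V U -> ~~ le U A -> ~~ le U B ->
  le A U -> le B U ->
  (forall C, le A C -> le C U -> le C V -> C = A) ->
  (forall C, le B C -> le C U -> le C V -> C = B) ->
  has_stack P 2.
Proof.
case=> mono back surj nAB nUV nleUV nleVU nUA nUB AU BU HA HB.
have [yU fU] := surj U; have [yV fV] := surj V.
have dUV : forall y y', f y = U -> f y' = V -> d y = d y'.
  move=> y y' fy fy'; case: (ltngtP (d y) (d y')) => h //.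
    by have := mono _ _ (bsum hr hw h); rewrite fy fy' (negbTE nleVU).
  by have := mono _ _ (bsum hr hw h); rewrite fy fy' (negbTE nleUV).
have dU : forall y, f y = U -> d y = d yU.
  by move=> y fy; rewrite (dUV y yV fy fV) (dUV yU yV fU fV).
have key : forall A0, ~~ le U A0 -> le A0 U ->
    (forall C, le A0 C -> le C U -> le C V -> C = A0) ->
    exists2 z, d z = (d yU).+1 & f z = A0.
  move=> A0 nUA0 A0U HC; have [y fy] := surj A0.
  have hy : d yU < d y.
    case: (ltngtP (d y) (d yU)) => h //.
      by have := mono _ _ (bsum hr hw h); rewrite fy fU (negbTE nUA0).
    have [y' yy' fy'] := back y U (etrans (congr1 (le^~ U) fy) A0U).
    have nyy' : y != y'.
      apply/eqP => e; subst y'; move: nUA0; rewrite -fy fy' le_refl //.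
    have := d_lt (introT andP (conj yy' nyy')); rewrite (dU y' fy'); lia.
  have [z yz dz] : exists2 z, le y z & d z = (d yU).+1 by apply: d_up; lia.
  exists z => //; apply: HC.
  - by rewrite -fy; apply: mono.
  - by rewrite -fU; apply: mono; apply: (bsum hr hw); lia.
  - rewrite -fV; apply: mono; apply: (bsum hr hw).
    by rewrite -(dUV yU yV fU fV); lia.
have [zA dzA fzA] := key A nUA AU HA.
have [zB dzB fzB] := key B nUB BU HB.
exists (d yU); split; first exact: d_gt0.
move=> k /andP[k1 k2].
have [->|->] : k = d yU \/ k = (d yU).+1 by lia.
  apply/card_gt1P; exists yU, yV; rewrite !inE !depth_isE d_gt0 /= eqxx.
  rewrite (dUV yU yV fU fV) eqxx; split => //.
  by apply/eqP => e; move: nUV; rewrite -fU -fV e eqxx.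
apply/card_gt1P; exists zA, zB; rewrite !inE !depth_isE /= dzA dzB eqxx.
split => //; by apply/eqP => e; move: nAB; rewrite -fzA -fzB e eqxx.
Qed.

Lemma val_from (Q : finPoset) (a b u v : Q) :
  a != b -> u != v -> ~~ le u v -> ~~ le v u -> ~~ le u a -> ~~ le u b ->
  le a u -> le b u ->
  (forall c, le a c -> le c u -> le c v -> c = a) ->
  (forall c, le b c -> le c u -> le c v -> c = b) ->
  stack_depth_le P 1 -> validates_Jankov P Q.
Proof.
move=> nab nuv nluv nlvu nua nub au bu Ha Hb Hs.
move=> [R [f [pm surj [r [g [ginj gle gim]]]]]].
have hrc : forall C, le (g a) C -> exists c, g c = C.
  move=> C gaC; apply/gim; apply: le_trans gaC.
  by apply/gim; exists a.
have hrcb : forall C, le (g b) C -> exists c, g c = C.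
  move=> C gaC; apply/gim; apply: le_trans gaC.
  by apply/gim; exists b.
have := @stack_from R f (g a) (g b) (g u) (g v) pm surj.
rewrite !gle !(inj_eq ginj) => /(_ nab nuv nluv nlvu nua nub au bu) H.
suff : 2 <= 1 by [].
apply: Hs; apply: H.
  move=> C gaC; have [c cC] := hrc C gaC; subst C; rewrite gle in gaC.
  by rewrite !gle => h2 h3; rewrite (Ha c gaC h2 h3).
move=> C gaC; have [c cC] := hrcb C gaC; subst C; rewrite gle in gaC.
by rewrite !gle => h2 h3; rewrite (Hb c gaC h2 h3).
Qed.
End Main.
Notation O5 k := (@Ordinal 5 k isT).
Notation O6 k := (@Ordinal 6 k isT).
Definition rk4 (a : 'I_5) : nat := nth 0 [:: 3;2;2;1;1] a.
Definition rk5 (a : 'I_6) : nat := nth 0 [:: 4;3;3;2;2;1] a.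
Lemma HR4 (a b : Q4) : a != b -> le a b = (rk4 b < rk4 a).
Proof. by case: a => [[|[|[|[|[|?]]]]] ?]; case: b => [[|[|[|[|[|?]]]]] ?]. Qed.
Lemma HR5 (a b : Q5) : a != b -> le a b = (rk5 b < rk5 a).
Proof.
by case: a => [[|[|[|[|[|[|?]]]]]] ?]; case: b => [[|[|[|[|[|[|?]]]]]] ?].
Qed.

Section Constr.
Variable P : finPoset.
Hypothesis hr : rooted P.
Hypothesis hw : frame_wPL P.

Lemma pm_layers (R : finPoset) (f : P -> R) (rk : R -> nat) (h : nat -> nat) :
  (forall a b : R, a != b -> le a b = (rk b < rk a)) ->
  (forall x, rk (f x) = h (d x)) ->
  (forall m n, m <= n -> h m <= h n) ->
  (forall x y, d y < d x -> h (d y) = h (d x) -> f x = f y) ->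
  (forall y, exists x, f x = y) -> pmorphism f.
Proof.
move=> HR Hrk hm hf surj; split.
  move=> x y lxy; case: (eqVneq x y) => [->|nxy]; first exact: le_refl.
  have dyx : d y < d x by apply: d_lt; rewrite /lt lxy nxy.
  have := hm _ _ (ltnW dyx); rewrite leq_eqVlt => /orP[/eqP e|hlt].
    by rewrite (hf x y dyx e) le_refl.
  case: (eqVneq (f x) (f y)) => [->|ne]; first exact: le_refl.
  by rewrite HR // !Hrk.
move=> x b hb; case: (eqVneq (f x) b) => [<-|ne].
  by exists x => //; exact: le_refl.
rewrite HR // in hb; have [w fw] := surj b.
exists w => //; apply: (bsum hr hw).
rewrite -fw !Hrk in hb; rewrite ltnNge; apply/negP => /hm.
by rewrite leqNgt hb.
Qed.

Lemma not_stack :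
  validates_Jankov P Q4 -> validates_Jankov P Q5 -> stack_depth_le P 1.
Proof.
move=> V4 V5 k [i [i0 Hk]]; rewrite leqNgt; apply/negP => k2.
have /card_gt1P [u0 [u1 []]] := Hk i ltac:(lia).
rewrite !inE !depth_isE i0 /= => /eqP du0 /eqP du1 nu.
have nu' : (u1 == u0) = false by rewrite eq_sym (negbTE nu).
have /card_gt1P [a0 [a1 []]] := Hk i.+1 ltac:(lia).
rewrite !inE !depth_isE /= => /eqP da0 /eqP da1 na.
have na' : (a1 == a0) = false by rewrite eq_sym (negbTE na).
case: hr => r Hr.
have dr : i.+1 < d r.
  case: (eqVneq r a0) => [e|ne].
    have : lt r a1 by rewrite /lt Hr e na.
    by move/d_lt; lia.
  by have := @d_lt _ r a0; rewrite /lt Hr ne => /(_ isT); lia.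
case: (ltnP 1 i) => [i2|i1].
  pose f (x : P) : 'I_6 :=
    if d x < i then O6 5 else if i.+1 < d x then O6 0
    else if d x == i.+1 then (if x == a0 then O6 1 else O6 2)
    else (if x == u0 then O6 3 else O6 4).
  have surj : forall y : Q5, exists x, f x = y.
  case=> [[|[|[|[|[|[|?]]]]]] p] //.
    * exists r; apply: val_inj; rewrite /f.
      by case: (ltnP (d r) i) => h; [exfalso; lia | rewrite dr].
    * exists a0; apply: val_inj; rewrite /f -da0 ltnn !eqxx.
      by case: (ltnP i.+1 i) => h; [exfalso; lia | ].
    * exists a1; apply: val_inj; rewrite /f -da1 ltnn eqxx na'.
      by case: (ltnP i.+1 i) => h; [exfalso; lia | ].
    * exists u0; apply: val_inj; rewrite /f -du0 ltnn eqxx.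
      have -> : (i.+1 < i) = false by lia.
      by have -> : (i == i.+1) = false by lia.
    * exists u1; apply: val_inj; rewrite /f -du1 ltnn nu'.
      have -> : (i.+1 < i) = false by lia.
      by have -> : (i == i.+1) = false by lia.
    * have [t _ dt] : exists2 t, le u0 t & d t = 1 by apply: d_up; lia.
      by exists t; apply: val_inj; rewrite /f dt i2.
  apply: V5; exists Q5, f; split; [| exact: surj |].
  - apply: (@pm_layers Q5 f rk5 (fun n => if n < i then 1 else minn (n - i + 2) 4)).
    + exact: HR5.
    + move=> x; have := d_gt0 x; rewrite /f => _.
      case: (ltnP (d x) i) => h1; first by [].
      case: (ltnP i.+1 (d x)) => h2; first by rewrite /rk5 /=; lia.
      case: (d x =P i.+1) => h3; first by case: eqP => _; rewrite /rk4 /rk5 /=; lia.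
      by case: eqP => _; rewrite /rk4 /rk5 /=; lia.
    + by move=> m n mn; case: (ltnP m i) => ?; case: (ltnP n i) => ?; lia.
    + move=> x y dyx; rewrite /f.
      case: (ltnP (d x) i) => ?; case: (ltnP (d y) i) => ?; try done; try lia.
      move=> e; have [hx hy] : i.+1 < d x /\ i.+1 < d y by lia.
      by rewrite hx hy.
    + exact: surj.
  - exists (O6 0), id; split; [exact: inj_id | by [] | ].
    by move=> y; split => _; [exists y | rewrite /le /= /leQ5 /= orbT].
have ei : i = 1 by lia.
rewrite ei in du0 du1 da0 da1 dr.
pose f (x : P) : 'I_5 :=
  if 2 < d x then O5 0
  else if d x == 2 then (if x == a0 then O5 1 else O5 2)
  else (if x == u0 then O5 3 else O5 4).
have surj : forall y : Q4, exists x, f x = y.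
case=> [[|[|[|[|[|?]]]]] p] //.
  * by exists r; apply: val_inj; rewrite /f dr.
  * by exists a0; apply: val_inj; rewrite /f -da0 !eqxx.
  * by exists a1; apply: val_inj; rewrite /f -da1 !eqxx na'.
  * by exists u0; apply: val_inj; rewrite /f -du0 !eqxx.
  * by exists u1; apply: val_inj; rewrite /f -du1 nu'.
apply: V4; exists Q4, f; split; [| exact: surj |].
- apply: (@pm_layers Q4 f rk4 (fun n => minn n 3)).
  + exact: HR4.
  + move=> x; have := d_gt0 x; rewrite /f => h0.
    case: (ltnP 2 (d x)) => h2; first by rewrite /rk4 /=; lia.
    case: (d x =P 2) => h3; first by case: eqP => _; rewrite /rk4 /rk5 /=; lia.
    by case: eqP => _; rewrite /rk4 /rk5 /=; lia.
  + by move=> m n mn; lia.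
  + move=> x y dyx e; rewrite /f.
    have [hx hy] : 2 < d x /\ 2 < d y by lia.
    by rewrite hx hy.
  + exact: surj.
- exists (O5 0), id; split; [exact: inj_id | by [] | ].
  by move=> y; split => _; [exists y | rewrite /le /= /leQ4 /= orbT].
Qed.
End Constr.

Theorem mainTheorem5 (P : finPoset) :
  rooted P -> frame_wPL P ->
  (validates_Jankov P Q4 /\ validates_Jankov P Q5 <-> stack_depth_le P 1).
Proof.
move=> hr hw; split; first by case=> V4 V5; exact: not_stack.
move=> Hs; split.
  apply: (@val_from P hr hw Q4 (O5 1) (O5 2) (O5 3) (O5 4)) => //.
    by case=> [[|[|[|[|[|?]]]]] ?] //= *; exact/val_inj.
  by case=> [[|[|[|[|[|?]]]]] ?] //= *; exact/val_inj.
apply: (@val_from P hr hw Q5 (O6 1) (O6 2) (O6 3) (O6 4)) => //.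
  by case=> [[|[|[|[|[|[|?]]]]]] ?] //= *; exact/val_inj.
by case=> [[|[|[|[|[|[|?]]]]]] ?] //= *; exact/val_inj.
Qed.
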